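(* Let $G$ be a finite group, let $\varphi: G\to \mathcal{U}(d)$ be a (non-projective) unitary representation, and let $\ket{\Psi_1},\dots,\ket{\Psi_n}\in\mathbb{C}^d$ be nonzero vectors such that the rank-one operators $A_k=\ket{\Psi_k}\bra{\Psi_k}$ are pairwise distinct, satisfy $\sum_{k=1}^n A_k=\mathbb{1}_d$, and satisfy $\varphi(g)A_k\varphi(g)^\dagger\in\{A_1,\dots,A_n\}$ for all $g\in G$ and all $k$. Let $M=(\ket{\Psi_1}\,\cdots\,\ket{\Psi_n})\in\mathbb{C}^{d\times n}$ be the matrix with columns $\ket{\Psi_k}$. Then there exist a homomorphism $\pi: G\to \mathcal{S}_n$ and a unitary representation $\varphi_{\rm mon}: G\to\mathcal{U}(n)$ all of whose images are monomial matrices, with $\varphi_{\rm mon}(g)e_k = e^{i\phi(g,k)}e_{\pi(g)k}$ for some real phases $\phi(g,k)$, such that $\varphi(g)M = M\varphi_{\rm mon}(g)$ for all $g\in G$.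
   Context: $\mathcal{U}(n)$ is the group of unitary $n\times n$ matrices, $\mathcal{S}_n$ the symmetric group on $n$ symbols, $e_1,\dots,e_n$ the standard basis of $\mathbb{C}^n$. A monomial matrix is a matrix with exactly one nonzero entry in each row and each column. *)

(* Defs.v *)
(* Complex numbers are R[i] (mathcomp-real-closed) over a
   real number field R : realType (so R[i] is a model of C). *)
From HB Require Import structures.
From mathcomp Require Import all_boot all_order all_algebra all_fingroup.
From mathcomp Require Import complex.
From mathcomp Require Import reals.
Set Implicit Arguments. Unset Strict Implicit. Unset Printing Implicit Defensive.
Import Order.TTheory GRing.Theory Num.Theory Num.Def.
Local Open Scope ring_scope.
Local Open Scope sesquilinear_scope.

Definition basis_vec {C : nzRingType} {n : nat} (k : 'I_n) : 'cV[C]_n :=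
  delta_mx k ord0.

Definition cols_mx (C : Type) (d n : nat) (Psi : 'I_n -> 'cV[C]_d) : 'M[C]_(d, n) :=
  \matrix_(i < d, k < n) Psi k i ord0.

Definition proj1 (C : numClosedFieldType) (d : nat) (v : 'cV[C]_d) : 'M[C]_d :=
  v *m (v ^t conjC).

(* Main.v *)
Require Import Defs.
From HB Require Import structures.
From mathcomp Require Import all_boot all_order all_algebra all_fingroup.
From mathcomp Require Import complex.
From mathcomp Require Import reals.
Import Order.TTheory GRing.Theory Num.Theory Num.Def.
Local Open Scope ring_scope.
Local Open Scope sesquilinear_scope.
Set Implicit Arguments. Unset Strict Implicit. Unset Printing Implicit Defensive.

Section R1.
Variable C : numClosedFieldType.

Lemma dot_self_neq0 d (w : 'cV[C]_d) : w != 0 -> (w ^t conjC *m w) 0 0 != 0.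
Proof.
move=> wn0; apply: contraNN wn0 => /eqP H; apply/eqP/matrixP => i j.
rewrite (ord1 j) mxE.
have : \sum_(k < d) `|w k 0| ^+ 2 == 0.
  rewrite -[X in _ == X]H mxE; apply/eqP; apply: eq_bigr => k _; by rewrite !mxE normCKC.
move/eqP/psumr_eq0P => /(_ (fun k _ => exprn_ge0 2 (normr_ge0 _)) i isT) /eqP.
by rewrite sqrf_eq0 normr_eq0 => /eqP.
Qed.

Lemma tr11 (A : 'M[C]_1) : \tr A = A 0 0.
Proof. by rewrite /mxtrace big_ord1. Qed.

Definition rcoef d (v w : 'cV[C]_d) : C :=
  (w ^t conjC *m v) 0 0 / (w ^t conjC *m w) 0 0.

Lemma rank_one d (v w : 'cV[C]_d) : w != 0 ->
  v *m v ^t conjC = w *m w ^t conjC -> v = rcoef v w *: w /\ `|rcoef v w| = 1.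
Proof.
move=> wn0 E; have bn0 := dot_self_neq0 wn0.
have Evv : (v ^t conjC *m v) 0 0 = (w ^t conjC *m w) 0 0.
  by rewrite -!tr11 mxtrace_mulC E mxtrace_mulC.
have Hv : v = rcoef v w *: w.
  have : w *m (w ^t conjC *m v) = v *m (v ^t conjC *m v).
    by rewrite !mulmxA E.
  rewrite [_ *m v]mx11_scalar [v ^t conjC *m v]mx11_scalar !mul_mx_scalar Evv.
  move=> H; rewrite /rcoef mulrC -scalerA H scalerA mulVf ?scale1r //.
split=> //.
have : v *m v ^t conjC = (rcoef v w * (rcoef v w)^*) *: (w *m w ^t conjC).
  by rewrite {1 2}Hv linearZ /= map_mxZ -scalemxAl -scalemxAr scalerA.
rewrite E => /(congr1 mxtrace); rewrite mxtraceZ mxtrace_mulC tr11.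
move=> /eqP; rewrite -subr_eq0 -{1}[(_ *m w) 0 0]mul1r -mulrBl mulf_eq0 (negbTE bn0) orbF.
rewrite subr_eq0 eq_sym -normCK => /eqP H; apply/eqP; rewrite -sqrp_eq1 //.
by rewrite H.
Qed.
End R1.
Section Defn.
Variables (C : numClosedFieldType) (d n : nat) (U : 'M[C]_d) (Psi : 'I_n -> 'cV[C]_d).
Definition lfun (k : 'I_n) : 'I_n :=
  odflt k [pick l | U *m proj1 (Psi k) *m U^t* == proj1 (Psi l)].
Definition ffun_ : 'I_n -> 'I_n := if injectiveb lfun then lfun else id.
Lemma ffun_inj : injective ffun_.
Proof. rewrite /ffun_; case: injectiveP => // _ x y; exact. Qed.
Definition pfun : 'S_n := perm ffun_inj.
Lemma pfunE k : injective lfun -> pfun k = lfun k.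
Proof. by move=> H; rewrite /pfun permE /ffun_; case: injectiveP. Qed.
Lemma lfunP k : (exists l, U *m proj1 (Psi k) *m U^t* = proj1 (Psi l)) ->
  U *m proj1 (Psi k) *m U^t* = proj1 (Psi (lfun k)).
Proof.
rewrite /lfun; case: pickP => [l /eqP //|H] [l El].
by move: (H l); rewrite El eqxx.
Qed.
End Defn.
Definition ccf (C : numClosedFieldType) d n (Psi : 'I_n -> 'cV[C]_d) (gT : finGroupType)
  (phi : gT -> 'M[C]_d) g k := rcoef (phi g *m Psi k) (Psi (pfun (phi g) Psi k)).
Definition phimonf (C : numClosedFieldType) d n (Psi : 'I_n -> 'cV[C]_d) (gT : finGroupType)
  (phi : gT -> 'M[C]_d) g : 'M[C]_n :=
  \matrix_(i, j) ((i == pfun (phi g) Psi j)%:R * ccf Psi phi g j).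
Unset Implicit Arguments. Set Strict Implicit. Set Printing Implicit Defensive.


Theorem mainTheorem2 (R : realType) (gT : finGroupType) (G : {group gT})
  (d n : nat) (phi : gT -> 'M[R[i]]_d) (Psi : 'I_n -> 'cV[R[i]]_d) :
  (* phi is a unitary representation of G *)
  (forall g, g \in G -> phi g \is unitarymx) ->
  (forall g h, g \in G -> h \in G -> phi (g * h)%g = phi g *m phi h) ->
  (* nonzero vectors, pairwise distinct rank-one projectors summing to 1 *)
  (forall k, Psi k != 0) ->
  (forall k l, proj1 (Psi k) = proj1 (Psi l) -> k = l) ->
  \sum_(k < n) proj1 (Psi k) = 1%:M ->
  (* covariance: the set {A_k} is permuted by conjugation *)
  (forall g k, g \in G ->
     exists l, phi g *m proj1 (Psi k) *m (phi g) ^t conjC = proj1 (Psi l)) ->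
  exists (pi : gT -> 'S_n) (phimon : gT -> 'M[R[i]]_n),
    (* pi is a group homomorphism G -> S_n (composition of functions) *)
    (forall g h k, g \in G -> h \in G -> pi (g * h)%g k = pi g (pi h k)) /\
    (* phimon is a unitary representation of G *)
    (forall g, g \in G -> phimon g \is unitarymx) /\
    (forall g h, g \in G -> h \in G -> phimon (g * h)%g = phimon g *m phimon h) /\
    (* monomial form: phimon(g) e_k = e^{i phase} e_{pi(g) k} *)
    (forall g (k : 'I_n), g \in G -> exists c : R[i],
        `|c| = 1 /\ phimon g *m basis_vec k = c *: basis_vec (pi g k)) /\
    (* intertwining *)
    (forall g, g \in G -> phi g *m cols_mx Psi = cols_mx Psi *m phimon g).
Proof.
move=> Hu Hm Hnz Hdist Hsum Hcov.
have Hr : forall g, g \in G -> phi g *m (phi g)^t* = 1%:M.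
  by move=> g gG; apply/unitarymxP/Hu.
have Hl : forall g, g \in G -> (phi g)^t* *m phi g = 1%:M.
  by move=> g gG; apply: mulmx1C; apply: Hr.
have lfP : forall g k, g \in G -> phi g *m proj1 (Psi k) *m (phi g)^t* = proj1 (Psi (lfun (phi g) Psi k)).
  by move=> g k gG; apply: lfunP; apply: Hcov.
have lf_inj : forall g, g \in G -> injective (lfun (phi g) Psi).
  move=> g gG k k' E; apply: Hdist.
  have H2 : forall X, (phi g)^t* *m (phi g *m X *m (phi g)^t*) *m phi g = X.
    by move=> X; rewrite !mulmxA (Hl g gG) mul1mx -mulmxA (Hl g gG) mulmx1.
  have := congr1 (fun X => (phi g)^t* *m X *m phi g)
    (etrans (lfP g k gG) (etrans (congr1 (fun l => proj1 (Psi l)) E) (esym (lfP g k' gG)))).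
  by move=> E2; exact: (etrans (esym (H2 _)) (etrans E2 (H2 _))).
have Api : forall g k, g \in G -> phi g *m proj1 (Psi k) *m (phi g)^t* = proj1 (Psi (pfun (phi g) Psi k)).
  by move=> g k gG; rewrite pfunE ?lfP //; apply: lf_inj.
have Hproj : forall g k, g \in G ->
    (phi g *m Psi k) *m (phi g *m Psi k)^t* = Psi (pfun (phi g) Psi k) *m (Psi (pfun (phi g) Psi k))^t*.
  move=> g k gG; rewrite trmx_mul map_mxM !mulmxA -[RHS]/(proj1 _) -Api //.
  by rewrite /proj1 !mulmxA.
have ccP : forall g k, g \in G ->
    phi g *m Psi k = ccf Psi phi g k *: Psi (pfun (phi g) Psi k) /\ `|ccf Psi phi g k| = 1.
  by move=> g k gG; apply: rank_one; [exact: Hnz | exact: Hproj].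
have pihom : forall g h k, g \in G -> h \in G ->
    pfun (phi (g * h)%g) Psi k = pfun (phi g) Psi (pfun (phi h) Psi k).
  move=> g h k gG hG; apply: Hdist; rewrite -Api ?groupM // Hm //.
  rewrite -Api // -Api //.
  by rewrite trmx_mul map_mxM !mulmxA.
exists (fun g => pfun (phi g) Psi), (phimonf Psi phi).
split; first exact: pihom.
split.
  move=> g gG; apply/unitarymxP/matrixP => i j; rewrite !mxE.
  rewrite (bigD1 ((pfun (phi g) Psi)^-1%g i)) //= big1 ?addr0.
    rewrite !mxE permKV eqxx mul1r rmorphM /= rmorph_nat.
    case: (eqVneq i j) => [->|ne]; last first.
      by rewrite mul0r mulr0.
    by rewrite ?eqxx mul1r -normCK (proj2 (ccP g _ gG)) expr1n.
  move=> l Hl0; rewrite !mxE.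
  have -> : (i == pfun (phi g) Psi l) = false.
    apply/negbTE; apply: contra Hl0 => /eqP ->; by rewrite permK.
  by rewrite !mul0r.
split.
  move=> g h gG hG; apply/matrixP => i j; rewrite !mxE.
  rewrite (bigD1 (pfun (phi h) Psi j)) //= big1 ?addr0; last first.
    by move=> l /negbTE Hl0; rewrite !mxE Hl0 mul0r mulr0.
  rewrite !mxE eqxx mul1r pihom //.
  have -> : ccf Psi phi (g * h)%g j = ccf Psi phi g (pfun (phi h) Psi j) * ccf Psi phi h j.
    have E1 := Logic.proj1 (ccP _ j (groupM gG hG)).
    have E2 : phi (g * h)%g *m Psi j = (ccf Psi phi h j * ccf Psi phi g (pfun (phi h) Psi j)) *:
        Psi (pfun (phi g) Psi (pfun (phi h) Psi j)).
      rewrite (Hm g h gG hG) -mulmxA (Logic.proj1 (ccP h j hG)) -scalemxAr.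
      by rewrite (Logic.proj1 (ccP g _ gG)) scalerA.
    rewrite (pihom g h j gG hG) in E1.
    apply/eqP; rewrite -subr_eq0.
    have : (ccf Psi phi (g * h)%g j - ccf Psi phi h j * ccf Psi phi g (pfun (phi h) Psi j)) *: Psi (pfun (phi g) Psi (pfun (phi h) Psi j)) == 0.
      by rewrite scalerBl -E1 -E2 subrr.
    by rewrite scaler_eq0 (negbTE (Hnz _)) orbF mulrC.
  by rewrite mulrA.
split.
  move=> g k gG; exists (ccf Psi phi g k); split; first exact: (proj2 (ccP g k gG)).
  apply/matrixP => i j; rewrite (ord1 j) /basis_vec -colE !mxE andbT mulrC.
  by rewrite eq_sym.
move=> g gG; apply/matrixP => i j.
have := congr1 (fun M : 'cV_d => M i 0) (Logic.proj1 (ccP g j gG)).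
rewrite !mxE => E.
rewrite (bigD1 (pfun (phi g) Psi j)) //= [X in _ = _ + X]big1 ?addr0; last first.
  by move=> l /negbTE Hl0; rewrite !mxE Hl0 mul0r mulr0.
rewrite !mxE eqxx mul1r mulrC -E.
by apply: eq_bigr => k _; rewrite !mxE.
Qed.
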